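(* Let $R$ be a ring, $\phi:M\to M'$ an epimorphism of left $R$-modules and $N$ a submodule of $M$ with $N\supseteq\ker\phi$. Then: (i) if $\beta^s_{co}(N)=\langle E_M(N)\rangle$, then $\beta^s_{co}(\phi(N))=\langle E_{M'}(\phi(N))\rangle$; (ii) if $N'$ is a submodule of $M'$ with $\beta^s_{co}(N')=\langle E_{M'}(N')\rangle$, then $\beta^s_{co}(\phi^{-1}(N'))=\langle E_M(\phi^{-1}(N'))\rangle$; (iii) if $\beta^s(N)=\langle E_M(N)\rangle$, then $\beta^s(\phi(N))=\langle E_{M'}(\phi(N))\rangle$; (iv) if $N'$ is a submodule of $M'$ with $\beta^s(N')=\langle E_{M'}(N')\rangle$, then $\beta^s(\phi^{-1}(N'))=\langle E_M(\phi^{-1}(N'))\rangle$.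
   Context: Rings are associative with identity; modules are unital left modules. For a module $X$ and submodule $K$: a submodule $P$ of $X$ is prime if $RX\not\subseteq P$ and for every ideal $A$ of $R$ and submodule $L$ with $AL\subseteq P$, $L\subseteq P$ or $AX\subseteq P$; completely prime if $RX\not\subseteq P$ and $rx\in P$ implies $x\in P$ or $rX\subseteq P$. $\beta^s(K)$ (resp. $\beta^s_{co}(K)$) is the intersection of all prime (resp. completely prime) submodules of $X$ containing $K$ ($=X$ if none), computed in the ambient module of $K$. $E_X(K)=\{rx: r\in R,x\in X, r^kx\in K\text{ for some }k\in\mathbb N\}$ and $\langle E_X(K)\rangle$ is the submodule it generates. *)

(* Defs.v *)
From HB Require Import structures.
From mathcomp Require Import all_boot all_order all_algebra.
Set Implicit Arguments. Unset Strict Implicit. Unset Printing Implicit Defensive.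
Import GRing.Theory.
Local Open Scope ring_scope.

Section Defs.
Variable R : pzRingType.

Definition subs (T : Type) (A B : T -> Prop) := forall x, A x -> B x.

Definition is_ideal (A : R -> Prop) :=
  [/\ A 0, (forall a b, A a -> A b -> A (a + b)),
      (forall r a, A a -> A (r * a)) & (forall r a, A a -> A (a * r))].

Variable M : lmodType R.

Definition is_submod (P : M -> Prop) :=
  [/\ P 0, (forall x y, P x -> P y -> P (x + y)) &
      (forall (r : R) x, P x -> P (r *: x))].

Definition gen_sub (S : M -> Prop) : M -> Prop :=
  fun x => forall P, is_submod P -> subs S P -> P x.

Definition prodsub (A : R -> Prop) (L : M -> Prop) : M -> Prop :=
  gen_sub (fun y => exists a l, [/\ A a, L l & y = a *: l]).

Definition whole : M -> Prop := fun _ => True.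

Definition prime_sub (P : M -> Prop) :=
  [/\ is_submod P, ~ subs (prodsub (fun _ => True) whole) P &
      forall A L, is_ideal A -> is_submod L -> subs (prodsub A L) P ->
        subs L P \/ subs (prodsub A whole) P].

Definition cprime_sub (P : M -> Prop) :=
  [/\ is_submod P, ~ subs (prodsub (fun _ => True) whole) P &
      forall (r : R) x, P (r *: x) -> P x \/ (forall y, P (r *: y))].

(* beta^s(K), beta^s_co(K): intersections (= M if the family is empty) *)
Definition beta_s (K : M -> Prop) : M -> Prop :=
  fun x => forall P, prime_sub P -> subs K P -> P x.
Definition beta_sco (K : M -> Prop) : M -> Prop :=
  fun x => forall P, cprime_sub P -> subs K P -> P x.

Definition EM (K : M -> Prop) : M -> Prop :=
  fun y => exists (r : R) x, y = r *: x /\ exists k : nat, K ((r ^+ k.+1) *: x).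

End Defs.

Definition img (R : pzRingType) (M M' : lmodType R) (f : M -> M') (N : M -> Prop)
  : M' -> Prop := fun y => exists x, N x /\ y = f x.
Definition preimg (R : pzRingType) (M M' : lmodType R) (f : M -> M') (N : M' -> Prop)
  : M -> Prop := fun x => N (f x).

(* Main.v *)
Require Import Defs.
From HB Require Import structures.
From mathcomp Require Import all_boot all_order all_algebra.
From Stdlib Require Import FunctionalExtensionality PropExtensionality.
Set Implicit Arguments. Unset Strict Implicit. Unset Printing Implicit Defensive.
Import GRing.Theory.
Local Open Scope ring_scope.

Section Gen.
Variables (R : pzRingType) (M : lmodType R).

Lemma gen_submod (S : M -> Prop) : is_submod (gen_sub S).
Proof.
split.
- by move=> P [] *.
- move=> x y hx hy P hP hS; case: (hP) => _ hD _; exact: hD (hx P hP hS) (hy P hP hS).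
- move=> r x hx P hP hS; case: (hP) => _ _ hZ; exact: hZ (hx P hP hS).
Qed.

Lemma gen_incl (S : M -> Prop) x : S x -> gen_sub S x.
Proof. by move=> hx P _ hS; apply: hS. Qed.

Lemma gen_min (S P : M -> Prop) : is_submod P -> subs S P -> subs (gen_sub S) P.
Proof. by move=> hP hS x hx; apply: hx. Qed.

Lemma prodsub_whole (P : M -> Prop) :
  subs (prodsub (fun _ => True) (@whole R M)) P <-> forall x, P x.
Proof.
split.
- move=> h x; apply: h; apply: gen_incl; exists 1, x; split => //; by rewrite scale1r.
- by move=> h x _.
Qed.

Lemma submodB (P : M -> Prop) x y : is_submod P -> P x -> P y -> P (x - y).
Proof.
case=> _ hD hZ hx hy; apply: hD => //; rewrite -scaleN1r; exact: hZ.
Qed.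

Lemma EM_incl (K : M -> Prop) x : K x -> EM K x.
Proof. move=> hx; exists 1, x; split; first by rewrite scale1r.
by exists 0%N; rewrite expr1 scale1r. Qed.
End Gen.

Section Map.
Variables (R : pzRingType) (M M' : lmodType R) (phi : {linear M -> M'}).
Hypothesis phi_surj : forall y : M', exists x : M, phi x = y.

Lemma preimg_submod (P : M' -> Prop) : is_submod P -> is_submod (preimg phi P).
Proof.
case=> h0 hD hZ; split; rewrite /preimg.
- by rewrite linear0.
- by move=> x y hx hy; rewrite linearD; apply: hD.
- by move=> r x hx; rewrite linearZ; apply: hZ.
Qed.

Lemma img_submod (P : M -> Prop) : is_submod P -> is_submod (img phi P).
Proof.
case=> h0 hD hZ; split; rewrite /img.
- by exists 0; rewrite linear0.
- move=> _ _ [x [hx ->]] [y [hy ->]]; exists (x + y); by rewrite linearD; split => //; apply: hD.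
- move=> r _ [x [hx ->]]; exists (r *: x); by rewrite linearZ; split => //; apply: hZ.
Qed.

Lemma prodsub_map (A : R -> Prop) (L : M -> Prop) (L' : M' -> Prop) :
  (forall l, L l -> L' (phi l)) -> forall z, prodsub A L z -> prodsub A L' (phi z).
Proof.
move=> hL z hz; apply: (gen_min (P := preimg phi (prodsub A L'))) hz.
- exact/preimg_submod/gen_submod.
- move=> _ [a [l [ha hl ->]]]; rewrite /preimg linearZ; apply: gen_incl.
  by exists a, (phi l); split => //; apply: hL.
Qed.

Lemma img_back (P : M -> Prop) : is_submod P -> (forall x, phi x = 0 -> P x) ->
  forall x, img phi P (phi x) -> P x.
Proof.
move=> hP hk x [x0 [hx0 e]].
have -> : x = x0 + (x - x0) by rewrite addrC subrK.
case: (hP) => _ hD _; apply: hD => //; apply: hk; by rewrite linearB e subrr.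
Qed.

Variables (N' : M' -> Prop) (hN' : is_submod N').
Let K := preimg phi N'.

Lemma K_ker x : phi x = 0 -> K x.
Proof. by rewrite /K /preimg => ->; case: hN'. Qed.

Lemma genE_iff x : gen_sub (EM K) x <-> gen_sub (EM N') (phi x).
Proof.
split.
- move=> hx; apply: (gen_min (P := preimg phi (gen_sub (EM N')))) hx.
  + exact/preimg_submod/gen_submod.
  + move=> _ [r [y [-> [k hk]]]]; rewrite /preimg linearZ; apply: gen_incl.
    exists r, (phi y); split => //; exists k; by rewrite -linearZ.
- have hG := gen_submod (EM K).
  have hk : forall z, phi z = 0 -> gen_sub (EM K) z.
    by move=> z hz; apply: gen_incl; apply: EM_incl; exact: K_ker.
  have key : forall y, gen_sub (EM N') y -> img phi (gen_sub (EM K)) y.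
    apply: gen_min; first exact: img_submod.
    move=> _ [r [y [-> [k hk']]]].
    have [x0 ex] := phi_surj y; subst y.
    exists (r *: x0); split; last by rewrite linearZ.
    apply: gen_incl; exists r, x0; split => //; exists k; move: hk'; rewrite /K /preimg linearZ; exact.
  by move=> hx; apply: img_back => //; apply: key.
Qed.

Lemma whole_pre (P : M' -> Prop) :
  ~ subs (prodsub (fun _ => True) (@whole R M')) P ->
  ~ subs (prodsub (fun _ => True) (@whole R M)) (preimg phi P).
Proof. by rewrite !prodsub_whole => h1 h2; apply: h1 => y; have [x <-] := phi_surj y; apply: h2. Qed.

Lemma whole_img (P : M -> Prop) :
  ~ subs (prodsub (fun _ => True) (@whole R M)) P ->
  (forall x, img phi P (phi x) -> P x) ->
  ~ subs (prodsub (fun _ => True) (@whole R M')) (img phi P).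
Proof. by rewrite !prodsub_whole => h1 hb h2; apply: h1 => x; apply: hb. Qed.

Lemma betaco_iff x : beta_sco K x <-> beta_sco N' (phi x).
Proof.
split.
- move=> hx P' [hP' hw hc] hsub.
  apply: (hx (preimg phi P')); last by move=> z; apply: hsub.
  split; first exact: preimg_submod.
  + exact: whole_pre.
  + move=> r y; rewrite /preimg linearZ => /hc [] h; [by left | right].
    by move=> z; rewrite /preimg linearZ; apply: h.
- move=> hx P [hP hw hc] hsub.
  have hk : forall z, phi z = 0 -> P z by move=> z /K_ker; apply: hsub.
  have hb := img_back hP hk.
  apply: (hb); apply: hx.
  + split; first exact: img_submod.
    * exact: (whole_img hw hb).
    * move=> r y; have [x0 <-] := phi_surj y; rewrite -linearZ => /hb /hc [] h.
      -- by left; exists x0.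
      -- right => y'; have [z <-] := phi_surj y'; rewrite -linearZ; by exists (r *: z).
  + move=> y hy; have [x0 e] := phi_surj y; exists x0; split => //; apply: hsub.
    by rewrite /K /preimg e.
Qed.

Lemma beta_iff x : beta_s K x <-> beta_s N' (phi x).
Proof.
split.
- move=> hx P' [hP' hw hc] hsub.
  apply: (hx (preimg phi P')); last by move=> z; apply: hsub.
  split; first exact: preimg_submod.
  + exact: whole_pre.
  + move=> A L hA hL hAL.
    have hL' := img_submod hL.
    have : subs (prodsub A (img phi L)) P'.
      apply: gen_min => // _ [a [_ [ha [l [hl ->]] ->]]].
      rewrite -linearZ; apply: hAL; apply: gen_incl; by exists a, l.
    move=> /(hc A _ hA hL') [] h; [left | right].
    * by move=> l hl; apply: h; exists l.
    * move=> z hz; apply: h; exact: prodsub_map hz.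
- move=> hx P [hP hw hc] hsub.
  have hk : forall z, phi z = 0 -> P z by move=> z /K_ker; apply: hsub.
  have hb := img_back hP hk.
  apply: (hb); apply: hx.
  + split; first exact: img_submod.
    * exact: (whole_img hw hb).
    * move=> A L' hA hL' hAL.
      have : subs (prodsub A (preimg phi L')) P.
        move=> z hz; apply: hb; apply: hAL; exact: prodsub_map hz.
      move=> /(hc A _ hA (preimg_submod hL')) [] h; [left | right].
      -- move=> y hy; have [x0 e] := phi_surj y; exists x0; split => //; apply: h.
         by rewrite /preimg e.
      -- have key : subs (prodsub A (@whole R M')) (img phi (prodsub A (@whole R M))).
           apply: gen_min; first exact/img_submod/gen_submod.
           move=> _ [a [l [ha _ ->]]]; have [x0 <-] := phi_surj l.
           exists (a *: x0); rewrite linearZ; split => //; apply: gen_incl; by exists a, x0.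
         move=> y /key [z [hz ->]]; exists z; split => //; exact: h.
  + move=> y hy; have [x0 e] := phi_surj y; exists x0; split => //; apply: hsub.
    by rewrite /K /preimg e.
Qed.
End Map.

Lemma predext (T : Type) (P Q : T -> Prop) : (forall x, P x <-> Q x) -> P = Q.
Proof. move=> h; apply: functional_extensionality => x; apply: propositional_extensionality; exact: h. Qed.

Theorem lemma4p14 (R : pzRingType) (M M' : lmodType R) (phi : {linear M -> M'})
  (phi_surj : forall y : M', exists x : M, phi x = y)
  (N : M -> Prop) (hN : is_submod N)
  (hker : forall x : M, phi x = 0 -> N x) :
  [/\ beta_sco N = gen_sub (EM N) ->
        beta_sco (img phi N) = gen_sub (EM (img phi N)),
      (forall N' : M' -> Prop, is_submod N' ->
        beta_sco N' = gen_sub (EM N') ->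
        beta_sco (preimg phi N') = gen_sub (EM (preimg phi N'))),
      beta_s N = gen_sub (EM N) ->
        beta_s (img phi N) = gen_sub (EM (img phi N)) &
      (forall N' : M' -> Prop, is_submod N' ->
        beta_s N' = gen_sub (EM N') ->
        beta_s (preimg phi N') = gen_sub (EM (preimg phi N')))].
Proof.
have hNi := img_submod phi hN.
have eN : preimg phi (img phi N) = N.
  apply: predext => x; split; first exact: img_back.
  by move=> hx; exists x.
split.
- move=> h; apply: predext => y; have [x <-] := phi_surj y.
  rewrite -(betaco_iff phi_surj hNi) -(genE_iff phi_surj hNi) eN h; by [].
- move=> N' hN' h; apply: predext => x.
  by rewrite (betaco_iff phi_surj hN') (genE_iff phi_surj hN') h.
- move=> h; apply: predext => y; have [x <-] := phi_surj y.
  rewrite -(beta_iff phi_surj hNi) -(genE_iff phi_surj hNi) eN h; by [].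
- move=> N' hN' h; apply: predext => x.
  by rewrite (beta_iff phi_surj hN') (genE_iff phi_surj hN') h.
Qed.
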